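(* Let $m$ be a positive integer, and write $m = 2^{\nu_2(m)} m_1$ with $m_1$ odd. If $m_1 \equiv 1 \pmod 4$, then $S_2(m)$ is empty.
   Context: For a positive integer $x$, $\nu_2(x)$ denotes the largest integer $e$ such that $2^e$ divides $x$. For a positive integer $m$, consider positive rational solutions $(x,y)$ of $x^y = y^{mx}$ with $x \neq 1$. For such a solution, $r = \log y / \log x$ is a positive rational number (so $y = x^r$); write $r = a/b$ with $a,b$ positive coprime integers. For an integer $k \ge 1$, $S_k(m)$ denotes the set of such solutions $(x,y)$ for which $|a-b| = k$. *)

(* Defs.v *)
From HB Require Import structures.
From mathcomp Require Import all_boot all_order all_algebra.
From mathcomp Require Import boolp classical_sets reals exp.
Set Implicit Arguments. Unset Strict Implicit. Unset Printing Implicit Defensive.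
Import Order.TTheory GRing.Theory Num.Theory.
Local Open Scope ring_scope.
Local Open Scope classical_set_scope.

Definition is_solution (R : realType) (m : nat) (x y : rat) : Prop :=
  0 < x /\ 0 < y /\ x != 1 /\
  powR (ratr x : R) (ratr y) = powR (ratr y : R) (m%:R * ratr x).

Definition S_set (R : realType) (m k : nat) : set (rat * rat) :=
  [set p | is_solution R m p.1 p.2 /\
    exists a b : nat, [/\ (0 < a)%N, (0 < b)%N, coprime a b,
       ln (ratr p.2 : R) / ln (ratr p.1) = a%:R / b%:R &
       `|(a%:Z - b%:Z)%R|%N = k]].

(* Main.v *)
Require Import Defs.
From HB Require Import structures.
From mathcomp Require Import all_boot all_order all_algebra.
From mathcomp Require Import boolp classical_sets reals exp.
From mathcomp Require Import zify ring lra.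
Import Order.TTheory GRing.Theory Num.Theory.
Local Open Scope ring_scope.

Lemma rat_sq_nat (w : rat) (N : nat) : w ^+ 2 = N%:R -> exists t : nat, N = (t ^ 2)%N.
Proof.
move=> hw.
have d0 : (denq w)%:~R != 0 :> rat by rewrite intr_eq0 denq_neq0.
have e1 : ((numq w) ^+ 2)%:~R = (N%:Z * (denq w) ^+ 2)%:~R :> rat.
  rewrite rmorphXn rmorphM /= rmorphXn /=.
  have -> : (N%:Z)%:~R = N%:R :> rat by [].
  have hw' : ((numq w)%:~R / (denq w)%:~R) ^+ 2 = N%:R :> rat by rewrite divq_num_den.
  rewrite -hw'.
  by rewrite expr_div_n mulfVK // expf_neq0.
have e2 : (numq w) ^+ 2 = (N%:Z * (denq w) ^+ 2) by apply: (intr_inj e1).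
have e3 : (`|numq w| ^ 2 = N * `|denq w| ^ 2)%N.
  by rewrite -!abszX e2 abszM abszX.
set p := `|numq w|%N in e3; set q := `|denq w|%N in e3.
have cop : coprime p q := coprime_num_den w.
have hq : (q ^ 2 %| p ^ 2)%N by rewrite e3 dvdn_mull.
have c2 : coprime (q ^ 2) (p ^ 2) by rewrite coprimeXl // coprimeXr // coprime_sym.
have : (q ^ 2 = 1)%N by rewrite -[RHS](eqP c2); exact/esym/gcdn_idPl.
move=> q1; exists p; rewrite e3 q1; lia.
Qed.

Lemma sq2 (e t w : nat) : odd w -> (t ^ 2 = 2 ^ e * w)%N -> (w %% 4 = 1)%N.
Proof.
elim/ltn_ind: e t => e IH t ow h.
case: e IH h => [|[|e]] IH h.
- rewrite expn0 mul1n in h.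
  have ot : odd t by move: ow; rewrite -h oddX.
  have [s hs] : exists s, t = (2 * s + 1)%N.
    exists t./2; rewrite -[t in LHS]odd_double_half ot; lia.
  have -> : w = (4 * (s * s + s) + 1)%N by rewrite -h hs; nia.
  by rewrite mulnC modnMDl.
- exfalso.
  have : ~~ odd (t ^ 2) by rewrite h expn1 oddM.
  rewrite oddX /= => /negbTE te.
  have [s hs] : exists s, t = (2 * s)%N.
    exists t./2; rewrite -[t in LHS]odd_double_half te; lia.
  rewrite hs in h.
  have : w = (2 * (s * s))%N by nia.
  move=> hw; move: ow; rewrite hw oddM //.
- have : ~~ odd (t ^ 2) by rewrite h !expnS !oddM.
  rewrite oddX /= => /negbTE te.
  have [s hs] : exists s, t = (2 * s)%N.
    exists t./2; rewrite -[t in LHS]odd_double_half te; lia.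
  apply: (IH e _ s ow); first by lia.
  rewrite hs !expnS in h; nia.
Qed.

Lemma cop_odd (c : nat) : coprime c (c + 2) -> odd c.
Proof.
move=> hc; apply/negPn/negP => ec.
have h2 : (2 %| gcdn c (c + 2))%N.
  rewrite dvdn_gcd; apply/andP; split; first by rewrite dvdn2.
  by rewrite dvdn_addr // dvdn2.
by move: h2; rewrite (eqP hc).
Qed.

Lemma real_part (R : realType) (m : nat) (x y : rat) (a b : nat) :
  is_solution R m x y -> (0 < b)%N ->
  ln (ratr y : R) / ln (ratr x) = a%:R / b%:R ->
  b%:R * y = m%:R * a%:R * x /\ y ^+ b = x ^+ a.
Proof.
move=> [hx [hy [hx1 hp]]] hb hl.
set X : R := ratr x; set Y : R := ratr y.
have X0 : 0 < X by rewrite ltr0q.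
have Y0 : 0 < Y by rewrite ltr0q.
have lX : ln X != 0 by rewrite ln_eq0 // fmorph_eq1.
have b0 : b%:R != 0 :> R by rewrite pnatr_eq0 -lt0n.
have lY : ln Y = a%:R / b%:R * ln X by rewrite -hl divfK.
move: hp; rewrite /powR (gt_eqF X0) (gt_eqF Y0) => /expR_inj hp.
rewrite -/X -/Y in hp.
have e1 : b%:R * Y = m%:R * a%:R * X.
  apply: (mulIf lX).
  rewrite lY in hp.
  have -> : m%:R * a%:R * X * ln X = (m%:R * X) * (a%:R / b%:R * ln X) * b%:R.
    by field.
  by rewrite -hp; ring.
have e2 : Y ^+ b = X ^+ a.
  have p1 : Y ^+ b \in Num.pos by rewrite posrE exprn_gt0.
  have p2 : X ^+ a \in Num.pos by rewrite posrE exprn_gt0.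
  apply: (ln_inj p1 p2).
  rewrite (lnXn _ Y0) (lnXn _ X0) lY.
  rewrite -[LHS]mulr_natr -[RHS]mulr_natr; field; exact: b0.
split.
  apply: (fmorph_inj (@ratr R)).
  by rewrite !rmorphM /= !ratr_nat.
apply: (fmorph_inj (@ratr R)).
by rewrite !rmorphXn.
Qed.

Lemma sq_of (u v x : rat) : v != 0 -> u * v ^+ 2 = x ^+ 2 -> u = (x / v) ^+ 2.
Proof. by move=> v0 h; rewrite expr_div_n -h mulfK // expf_neq0. Qed.

Lemma rat_part (m a b : nat) (x y : rat) : (0 < m)%N -> (0 < a)%N -> (0 < b)%N ->
  0 < x -> b%:R * y = m%:R * a%:R * x -> y ^+ b = x ^+ a ->
  ((a = b + 2 /\ odd b) \/ (b = a + 2 /\ odd a))%N ->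
  exists z : rat, z ^+ 2 = (m * a * b)%N%:R.
Proof.
move=> m0 a0 b0 x0 e1 e2 hab.
set u : rat := m%:R * a%:R / b%:R.
have bq : b%:R != 0 :> rat by rewrite pnatr_eq0 -lt0n.
have u0 : u != 0 by rewrite /u !mulf_neq0 ?invr_eq0 // pnatr_eq0 -lt0n.
have x0' : x != 0 by rewrite gt_eqF.
have hy : y = u * x by rewrite /u; apply: (mulfI bq); rewrite e1; field.
have [w hw] : exists w : rat, u = w ^+ 2.
  case: hab => [[ha ob]|[hb oa]].
  - move: e2; rewrite ha hy exprMn exprD [RHS]mulrC => /(mulIf (expf_neq0 _ x0')) hu.
    have [k hk] : exists k, b = (2 * k + 1)%N.
      exists b./2; rewrite -[b in LHS]odd_double_half ob; lia.
    rewrite hk in hu.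
    exists (x / u ^+ k); apply: sq_of; first exact: expf_neq0.
    by rewrite -hu -exprM -exprS; congr (_ ^+ _); lia.
  - move: e2; rewrite hb hy exprMn => hu.
    have [k hk] : exists k, a = (2 * k + 1)%N.
      exists a./2; rewrite -[a in LHS]odd_double_half oa; lia.
    have hu2 : (u ^+ (a + 2) * x ^+ 2) * x ^+ a = 1 * x ^+ a.
      by rewrite mul1r -{2}hu -mulrA -exprD (addnC 2 a).
    move/(mulIf (expf_neq0 a x0')) in hu2.
    have hu' : u * (u ^+ (k + 1) * x) ^+ 2 = 1 ^+ 2.
      rewrite expr1n -hu2 exprMn -exprM mulrA -exprS hk; congr (_ ^+ _ * _); lia.
    exists (1 / (u ^+ (k + 1) * x)); apply: sq_of => //.
    by rewrite mulf_neq0 // expf_neq0.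
exists (w * b%:R).
rewrite exprMn -hw /u !natrM; field.
exact: bq.
Qed.

Local Close Scope ring_scope.
Local Open Scope classical_set_scope.

Theorem lemma5 (R : realType) (m m1 : nat) :
  (0 < m)%N -> odd m1 -> m = (2 ^ logn 2 m * m1)%N -> m1 %% 4 = 1 ->
  S_set R m 2 = set0.
Proof.
move=> m0 om1 hm m14.
rewrite -subset0 => -[x y] /= [hs [a [b [a0 b0 cab hl hab]]]].
have [e1 e2] := @real_part R m x y a b hs b0 hl.
have x0 : (0 < x)%R by case: hs.
have hab' : ((a = b + 2 /\ odd b) \/ (b = a + 2 /\ odd a))%N.
  have : (a = b + 2 \/ b = a + 2)%N by lia.
  case=> h; [left|right]; split=> //; apply: cop_odd.
    by rewrite -h coprime_sym.
  by rewrite -h.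
have [z hz] := @rat_part m a b x y m0 a0 b0 x0 e1 e2 hab'.
have [t ht] := @rat_sq_nat z _ hz.
have [c [oc hc]] : exists c, odd c /\ (a * b = c * (c + 2))%N.
  case: hab' => [[-> ob]|[-> oa]]; [exists b|exists a]; split => //; lia.
have ow : odd (m1 * (c * (c + 2))) by rewrite !oddM om1 oc oddD oc.
have eq4 : t ^ 2 = 2 ^ logn 2 m * (m1 * (c * (c + 2))).
  by rewrite -ht -hc mulnA -hm mulnA.
have h4 := @sq2 (logn 2 m) t (m1 * (c * (c + 2))) ow eq4.
have [d hd] : exists d, c = (2 * d + 1)%N.
  exists c./2; rewrite -[c in LHS]odd_double_half oc; lia.
have [k hk] : exists k, m1 = (4 * k + 1)%N.
  exists (m1 %/ 4); rewrite {1}(divn_eq m1 4) m14; lia.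
have : (m1 * (c * (c + 2)) = 4 * (4 * k * (d * d + 2 * d) + 3 * k + d * d + 2 * d) + 3)%N.
  rewrite hk hd; nia.
move=> hE; move: h4; rewrite hE mulnC modnMDl //.
Qed.
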